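(* Let $r \in \mathbb{Q}_{>0}$ be such that $S_r$ is atomic. Then: (1) if $r < 1$, then $\omega(1) = \infty$; (2) if $r \in \mathbb{N}$, then $\omega(1) = 1$; (3) if $r \in \mathbb{Q}_{>1} \setminus \mathbb{N}$, then $\omega(1) = \mathsf{d}(r)$.
   Context: For $q \in \mathbb{Q}_{>0}$, $\mathsf{n}(q),\mathsf{d}(q)$ are the positive coprime integers with $q = \mathsf{n}(q)/\mathsf{d}(q)$. $S_r$ is the additive submonoid of $(\mathbb{Q}_{\ge 0},+)$ generated by $\{r^n : n \in \mathbb{N}_0\}$; it is atomic exactly when $r=1$ or $\mathsf{n}(r)>1$, and $1$ is always an atom of $S_r$ when atomic. For $x,y \in S_r$, $x \mid_{S_r} y$ means $y = x + w$ for some $w \in S_r$. For $x \in S_r \setminus\{0\}$, $\omega(x)$ is the smallest $n \in \mathbb{N}$ such that whenever $x \mid_{S_r} a_1 + \dots + a_t$ for atoms $a_1, \dots, a_t$, there is $T \subseteq \{1,\dots,t\}$ with $|T| \le n$ and $x \mid_{S_r} \sum_{i \in T} a_i$; if no such $n$ exists, $\omega(x) = \infty$. *)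

(* Defs.v *)
From HB Require Import structures.
From mathcomp Require Import all_boot all_order all_algebra.
Set Implicit Arguments. Unset Strict Implicit. Unset Printing Implicit Defensive.
Import Order.TTheory GRing.Theory Num.Theory.
Local Open Scope ring_scope.

(* x belongs to S_r: x is a finite N_0-combination of the powers r^n. *)
Definition inS (r x : rat) : Prop :=
  exists c : seq nat, x = \sum_(i < size c) (nth 0%N c i)%:R * r ^+ i.

Definition atom (r a : rat) : Prop :=
  inS r a /\ a <> 0 /\
  forall u v, inS r u -> inS r v -> a = u + v -> u = 0 \/ v = 0.

Definition atomic (r : rat) : Prop :=
  forall x, inS r x -> x <> 0 ->
    exists s : seq rat, (forall a, a \in s -> atom r a) /\ x = \sum_(a <- s) a.

Definition sdvd (r x y : rat) : Prop := exists w, inS r w /\ y = x + w.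

(* n satisfies the defining property of omega(x): whenever x divides a sum of
   atoms a_1..a_t (given as a list, repetitions allowed), x divides the sum of
   a sub-family of at most n of them (sub-families = subsequences). *)
Definition omega_bound (r x : rat) (n : nat) : Prop :=
  forall s : seq rat, (forall a, a \in s -> atom r a) ->
    sdvd r x (\sum_(a <- s) a) ->
    exists t : seq rat, subseq t s /\ (size t <= n)%N /\ sdvd r x (\sum_(a <- t) a).

Definition omega_eq (r x : rat) (k : nat) : Prop :=
  (0 < k)%N /\ omega_bound r x k /\ forall n, (0 < n)%N -> omega_bound r x n -> (k <= n)%N.

Definition omega_inf (r x : rat) : Prop :=
  forall n, (0 < n)%N -> ~ omega_bound r x n.

(* Main.v *)
Require Import Defs.
From HB Require Import structures.
From mathcomp Require Import all_boot all_order all_algebra.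
From mathcomp Require Import zify ring lra.
Import Order.TTheory GRing.Theory Num.Theory.
Set Implicit Arguments. Unset Strict Implicit.
Local Open Scope ring_scope.

Definition inSf (r x : rat) := exists N (f : nat -> nat), x = \sum_(i < N) (f i)%:R * r ^+ i.

Lemma inS_f r x : inS r x -> inSf r x.
Proof. by case=> c ->; exists (size c), (nth 0%N c). Qed.

Lemma f_inS r x : inSf r x -> inS r x.
Proof.
case=> N [f ->]; exists (mkseq f N); rewrite size_mkseq.
by apply: eq_bigr => i _; rewrite nth_mkseq.
Qed.

Lemma padL (r : rat) N K (f : nat -> nat) : (N <= K)%N ->
  \sum_(i < N) (f i)%:R * r ^+ i = \sum_(i < K) (if (i < N)%N then f i else 0%N)%:R * r ^+ i.
Proof.
move=> hNK; rewrite (big_ord_widen K (fun i => (f i)%:R * r ^+ i)) // big_mkcond.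
by apply: eq_bigr => i _; case: ifP => _ //; rewrite mul0r.
Qed.

Lemma inS_add r x y : inS r x -> inS r y -> inS r (x + y).
Proof.
move=> /inS_f [N [f ->]] /inS_f [M [g ->]]; apply: f_inS.
exists (N + M)%N, (fun i => (if (i < N)%N then f i else 0%N) + (if (i < M)%N then g i else 0%N))%N.
rewrite (@padL r N (N + M)%N f) ?leq_addr // (@padL r M (N + M)%N g) ?leq_addl //.
by rewrite -big_split /=; apply: eq_bigr => i _; rewrite natrD mulrDl.
Qed.

Lemma inS_pow r k : inS r (r ^+ k).
Proof.
apply: f_inS; exists k.+1, (fun i => nat_of_bool (i == k)).
rewrite big_ord_recr /= eqxx mul1r big1 ?add0r // => i _.
by rewrite (ltn_eqF (ltn_ord i)) mul0r.
Qed.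

Lemma inS_nat r m : inS r m%:R.
Proof.
apply: f_inS; exists 1%N, (fun _ => m).
by rewrite big_ord1 expr0 mulr1.
Qed.

Lemma inS_ge0 r x : 0 <= r -> inS r x -> 0 <= x.
Proof.
move=> hr [c ->]; apply: sumr_ge0 => i _.
by apply: mulr_ge0; [apply: ler0n | apply: exprn_ge0].
Qed.

Lemma inS_dec r x : inS r x -> exists (e0 : nat) x', inS r x' /\ x = e0%:R + r * x'.
Proof.
move=> /inS_f [[|N] [f ->]].
  by exists 0%N, 0; split; [apply: (inS_nat r 0) | rewrite big_ord0 mulr0 addr0].
exists (f 0%N), (\sum_(i < N) (f i.+1)%:R * r ^+ i); split.
  by apply: f_inS; exists N, (fun i => f i.+1).
rewrite big_ord_recl /= expr0 mulr1 mulr_sumr; congr (_ + _).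
by apply: eq_bigr => i _; rewrite /bump /= exprS mulrCA.
Qed.
Lemma rnd (r : rat) : 0 < r -> r * (`|denq r|%N)%:R = (`|numq r|%N)%:R.
Proof.
move=> hr.
have h1 : (0 <= numq r)%R by rewrite le0r numq_gt0 hr orbT.
have h2 : (0 <= denq r)%R by apply: ltW; apply: denq_gt0.
by rewrite !natr_absz !ger0_norm // numqE.
Qed.
Lemma atom_pos (r a : rat) : 0 < r -> atom r a -> 0 < a.
Proof.
move=> hr [ha [hne _]]; rewrite lt0r; apply/andP; split.
  by apply/eqP.
exact: inS_ge0 (ltW hr) ha.
Qed.

Lemma atom_pow (r a : rat) : 0 < r -> atom r a -> exists k, a = r ^+ k.
Proof.
move=> hr hat; have [ha [hne hsplit]] := hat.
have [N [f ef]] := inS_f ha.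
have [/existsP [i hi] | hno] := boolP [exists i : 'I_N, (0 < f i)%N]; last first.
  exfalso; apply: hne; rewrite ef big1 // => i _.
  have : ~~ (0 < f i)%N by apply: contra hno => h; apply/existsP; exists i.
  by rewrite -eqn0Ngt => /eqP ->; rewrite mul0r.
set g := fun j : nat => if j == i then (f i).-1 else f j.
have eg : a = r ^+ i + \sum_(j < N) (g j)%:R * r ^+ j.
  rewrite ef (bigD1 i) //= [in RHS](bigD1 i) //= addrA; congr (_ + _).
    rewrite /g eqxx -{1}(prednK hi) -addn1 natrD mulrDl mul1r addrC //.
  apply: eq_bigr => j hj; rewrite /g.
  by have -> : (nat_of_ord j == nat_of_ord i) = false by apply/negbTE.
have [h0 | h0] := hsplit _ _ (inS_pow r i) (f_inS (ex_intro _ N (ex_intro _ g erefl))) eg.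
  by exfalso; move: h0; apply/eqP; rewrite expf_neq0 // gt_eqF.
by exists i; rewrite eg h0 addr0.
Qed.
Lemma sum_mem_le (s : seq rat) x : (forall a, a \in s -> 0 <= a) -> x \in s -> x <= \sum_(a <- s) a.
Proof.
move=> h hx; rewrite (big_rem _ hx) /= lerDl; apply: sumr_ge0 => a _.
Abort.
Lemma sum_mem_le (s : seq rat) x : (forall a, a \in s -> 0 <= a) -> x \in s -> x <= \sum_(a <- s) a.
Proof.
move=> h hx; rewrite (big_rem _ hx) /= lerDl big_seq; apply: sumr_ge0 => a ha.
by apply: h; apply: mem_rem ha.
Qed.

Lemma sum_nseq (m : nat) (x : rat) : \sum_(a <- nseq m x) a = x *+ m.
Proof. by elim: m => [|m ih]; rewrite ?big_nil // big_cons ih mulrS. Qed.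

Lemma sum_rep (m : nat) (D : seq rat) : \sum_(a <- flatten (nseq m D)) a = (\sum_(a <- D) a) *+ m.
Proof. by elim: m => [|m ih]; rewrite ?big_nil //= big_cat ih mulrS. Qed.

Lemma mem_rep (m : nat) (D : seq rat) x : x \in flatten (nseq m D) -> x \in D.
Proof. by elim: m => [|m ih] //=; rewrite mem_cat => /orP [//|/ih]. Qed.

Lemma subseq_nseq (T : eqType) (s : seq T) (x : T) m : (m <= count_mem x s)%N -> subseq (nseq m x) s.
Proof.
elim: s m => [|y s ih] m /=; first by rewrite leqn0 => /eqP ->.
case: (eqVneq y x) => [-> | hne] /=.
  case: m => [|m] h; first by [].
  by rewrite /= eqxx; apply: ih; rewrite add1n ltnS in h.
rewrite add0n => h; apply: subseq_trans (ih _ h) (subseq_cons s y).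
Qed.

Lemma pows (r : rat) (s : seq rat) : (forall a, a \in s -> exists k, a = r ^+ k) ->
  exists ks, s = map (fun k => r ^+ k) ks.
Proof.
elim: s => [|a s ih] h; first by exists [::].
have [k ->] := h a (mem_head a s).
have [ks ->] : exists ks, s = map (fun k => r ^+ k) ks.
  by apply: ih => b hb; apply: h; rewrite in_cons hb orbT.
by exists (k :: ks).
Qed.

Lemma sum_dec (r : rat) (ks : seq nat) : \sum_(k <- ks) r ^+ k =
  (count_mem 0%N ks)%:R + r * \sum_(k <- [seq k.-1 | k <- ks & (0 < k)%N]) r ^+ k.
Proof.
elim: ks => [|k ks ih]; first by rewrite !big_nil mulr0 addr0.
case: k => [|k] /=; rewrite big_cons ih.
  by rewrite expr0 /= natrD addrA.
by rewrite /= big_cons add0n mulrDr exprS addrCA.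
Qed.

Lemma count_dec (ks : seq nat) j : count_mem j [seq k.-1 | k <- ks & (0 < k)%N] = count_mem j.+1 ks.
Proof.
rewrite count_map count_filter; apply: eq_count => k /=.
by case: k => [|k] /=; rewrite ?andbF ?andbT.
Qed.
Definition dint (d : nat) (z : rat) := exists M (w : int), d%:R ^+ M * z = w%:~R.

Lemma dint_int d (w : int) : dint d w%:~R.
Proof. by exists 0%N, w; rewrite expr0 mul1r. Qed.

Lemma dint_nat d (m : nat) : dint d m%:R.
Proof. by exists 0%N, m%:Z; rewrite expr0 mul1r. Qed.

Lemma dint_add d x y : dint d x -> dint d y -> dint d (x + y).
Proof.
move=> [M [w hw]] [K [v hv]]; exists (M + K)%N, (w * d%:Z ^+ K + v * d%:Z ^+ M)%R.
have -> : d%:R ^+ (M + K) * (x + y) = (d%:R ^+ M * x) * d%:R ^+ K + (d%:R ^+ K * y) * d%:R ^+ M.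
  by rewrite exprD; ring.
by rewrite hw hv rmorphD /= !rmorphM /= !rmorphXn /=.
Qed.

Lemma dint_opp d x : dint d x -> dint d (- x).
Proof. by move=> [M [w hw]]; exists M, (- w)%R; rewrite mulrN hw rmorphN. Qed.

Lemma dint_mul d x y : dint d x -> dint d y -> dint d (x * y).
Proof.
move=> [M [w hw]] [K [v hv]]; exists (M + K)%N, (w * v)%R.
by rewrite exprD mulrACA hw hv rmorphM.
Qed.

Lemma ndiv (r : rat) (n d m : nat) (z : rat) : r * d%:R = n%:R -> coprime n d ->
  dint d z -> m%:R = r * z -> (n %| m)%N.
Proof.
move=> hrd hco [M [w hw]] hm.
have e : ((m * d ^ M.+1)%N%:R : rat) = n%:R * w%:~R.
  rewrite -hw -hrd natrM natrX hm exprS; ring.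
have e2 : ((m * d ^ M.+1)%N%:Z) = (n%:Z * w)%R.
  apply: (@intr_inj rat); rewrite [RHS]rmorphM /= -e; exact: (pmulrn _ _).
have e3 : (m * d ^ M.+1)%N = (n * `|w|)%N.
  by rewrite -[LHS]absz_nat e2 abszM absz_nat.
have : (n %| m * d ^ M.+1)%N by rewrite e3 dvdn_mulr.
by rewrite Gauss_dvdl // coprimeXr.
Qed.
Lemma dint_r (r : rat) n d : r * d%:R = n%:R -> dint d r.
Proof. by move=> hrd; exists 1%N, n%:Z; rewrite expr1 mulrC hrd. Qed.

Lemma dint_pow (r : rat) n d k : r * d%:R = n%:R -> dint d (r ^+ k).
Proof.
move=> hrd; elim: k => [|k ih]; first by rewrite expr0; apply: (dint_nat d 1).
by rewrite exprS; apply: dint_mul (dint_r hrd) ih.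
Qed.

Lemma dint_inS (r : rat) n d e : r * d%:R = n%:R -> inS r e -> dint d e.
Proof.
move=> hrd [c ->]; apply: (big_ind (dint d)); first exact: (dint_nat d 0).
  exact: dint_add.
by move=> i _; apply: dint_mul; [apply: dint_nat | apply: dint_pow hrd].
Qed.

Lemma dint_sumks (r : rat) n d ks : r * d%:R = n%:R -> dint d (\sum_(k <- ks) r ^+ k).
Proof.
move=> hrd; apply: (big_ind (dint d)); first exact: (dint_nat d 0).
  exact: dint_add.
by move=> i _; apply: dint_pow hrd.
Qed.

Lemma keyL (r : rat) n d : 0 < r -> r * d%:R = n%:R -> coprime n d ->
  forall B ks, all (fun k => (k < B)%N) ks -> (forall j, (count_mem j ks < d)%N) ->
  forall (a : nat) e, (0 < a)%N -> inS r e -> r * \sum_(k <- ks) r ^+ k <> a%:R + e.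
Proof.
move=> hr hrd hco; elim=> [|B ih] ks hall hcnt a e ha he.
  case: ks hall hcnt => [|k ks] //= _ _.
  rewrite big_nil mulr0 => h0.
  have h1 : 0 <= e := inS_ge0 (ltW hr) he.
  have h2 : 1 <= a%:R :> rat by rewrite ler1n.
  lra.
rewrite sum_dec.
set c0 := count_mem 0%N ks; set ks' := [seq k.-1 | k <- ks & (0 < k)%N].
set Y := \sum_(k <- ks') r ^+ k.
have [e0 [e' [he' ee]]] := inS_dec he.
rewrite ee => h.
have hz : (a + e0)%N%:R = r * (c0%:R + r * Y - e').
  rewrite natrD mulrBr h; ring.
have hdz : dint d (c0%:R + r * Y - e').
  apply: dint_add; last by apply: dint_opp; apply: dint_inS hrd he'.
  by apply: dint_add; [apply: dint_nat | apply: dint_mul (dint_r hrd) (dint_sumks _ hrd)].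
have hdiv := ndiv hrd hco hdz hz.
set q := ((a + e0) %/ n)%N.
have hq : (a + e0)%N = (q * n)%N by rewrite divnK.
have hqpos : (0 < q)%N.
  rewrite lt0n; apply/eqP => hq0; move: hq; rewrite hq0 mul0n; lia.
have hc0 : (c0 < d)%N := hcnt 0%N.
have e1 : c0%:R + r * Y = (d * q)%N%:R + e'.
  apply: (mulfI (x := r)); first by rewrite gt_eqF.
  rewrite h mulrDr addrA -natrD hq natrM natrM -hrd; ring.
have hle : (c0 <= d * q)%N.
  apply: leq_trans (ltnW hc0) _; by rewrite leq_pmulr.
have e2 : r * Y = (d * q - c0)%N%:R + e'.
  rewrite natrB //; lra.
apply: (ih ks' _ _ (d * q - c0)%N e' _ he' e2).
- apply/allP => k /mapP [k0]; rewrite mem_filter => /andP [hk0 hin] ->.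
  have := allP hall k0 hin; case: k0 hk0 {hin} => [|k0] //=.
- by move=> j; rewrite /ks' count_dec.
- have := leq_pmulr d hqpos; lia.
Qed.
Lemma inS_nmul (r : rat) (m : nat) x : inS r x -> inS r (m%:R * x).
Proof.
move=> hx; elim: m => [|m ih]; first by rewrite mul0r; apply: (inS_nat r 0).
by rewrite -addn1 natrD mulrDl mul1r; apply: inS_add.
Qed.

Lemma pow_dvd (r : rat) n d : r * d%:R = n%:R -> (d <= n)%N -> (0 < n)%N ->
  forall j, inS r (n%:R * r ^+ j - 1).
Proof.
move=> hrd hdn hn; elim=> [|j ih].
  have -> : n%:R * r ^+ 0 - 1 = (n - 1)%N%:R :> rat by rewrite natrB // expr0 mulr1.
  exact: inS_nat.
have -> : n%:R * r ^+ j.+1 - 1 = (n%:R * r ^+ j - 1) + (n - d)%N%:R * r ^+ j.+1.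
  by rewrite natrB // exprS -hrd; ring.
by apply: inS_add ih (inS_nmul _ (inS_pow r j.+1)).
Qed.

Lemma sum_le_const (t : seq rat) c : (forall a, a \in t -> a <= c) -> \sum_(a <- t) a <= c *+ size t.
Proof.
elim: t => [|a t ih] h; first by rewrite big_nil.
rewrite big_cons /= mulrS; apply: lerD; first by apply: h; rewrite mem_head.
by apply: ih => b hb; apply: h; rewrite in_cons hb orbT.
Qed.

Lemma bern (n K : nat) : (n ^ K * (n + K) <= (n + 1) ^ K * n)%N.
Proof.
elim: K => [|K ih]; first by rewrite !expn0 addn0.
rewrite !expnS.
have h : ((n + 1) * ((n + 1) ^ K * n) >= (n + 1) * (n ^ K * (n + K)))%N by rewrite leq_mul2l ih orbT.
move: h; set p := (n ^ K)%N; set q := ((n + 1) ^ K)%N => h; nia.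
Qed.

Lemma exB (ks : seq nat) : exists B, all (fun k => (k < B)%N) ks.
Proof.
elim: ks => [|k ks [B hB]]; first by exists 0%N.
exists (maxn k.+1 B); rewrite /= leq_max ltnSn /=.
apply/allP => x hx; have := allP hB x hx; rewrite /= leq_max => ->; by rewrite orbT.
Qed.

Lemma ratom (r : rat) : 1 < r -> atomic r -> ~ (exists m : nat, r = m%:R) -> atom r r.
Proof.
move=> hr hat hni.
have hr0 : 0 < r by apply: lt_trans hr.
have hrne : r <> 0 by move=> e; move: hr0; rewrite e ltxx.
have hrS : inS r r by rewrite -{2}(expr1 r); apply: inS_pow.
have [D [hD eD]] := hat r hrS hrne.
have [hin | hnin] := boolP (r \in D); first exact: hD.
exfalso; apply: hni; exists (size D).
have h1 : all (pred1 1) D.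
  apply/allP => a ha; have [k ek] := atom_pow hr0 (hD a ha).
  have hle : a <= r.
    by rewrite eD; apply: sum_mem_le => // b hb; apply: ltW; apply: atom_pos hr0 (hD b hb).
  case: k ek => [|[|k]] ek; first by rewrite ek expr0 /=.
    by move: hnin; rewrite -(expr1 r) -ek ha.
  exfalso; move: hle; rewrite ek exprS; apply/negP; rewrite -ltNge.
  have : 1 < r ^+ k.+1 by rewrite exprn_egt1.
  move=> h; rewrite -{1}(mulr1 r) ltr_pM2l //.
move/all_pred1P: h1 => eD1.
by rewrite eD {1}eD1 sum_nseq.
Qed.
Lemma part1 (r : rat) (hr : 0 < r) (hat : atomic r) : r < 1 -> omega_inf r 1.
Proof.
move=> hr1 N hN hb.
set n := `|numq r|%N; set d := `|denq r|%N.
have hrd : r * d%:R = n%:R := rnd hr.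
have hd : (0 < d)%N by rewrite absz_gt0 denq_neq0.
have hdR : 0 < d%:R :> rat by rewrite ltr0n.
have hn : (0 < n)%N.
  by rewrite -(ltr0n rat) -hrd mulr_gt0.
have hnd : (n < d)%N.
  rewrite -(ltr_nat rat) -hrd; nra.
set K := (N * n)%N.
have hB : (N * n ^ K < d ^ K)%N.
  have h1 := bern n K.
  have h2 : (n ^ K * N.+1 <= (n + 1) ^ K)%N.
    rewrite -(leq_pmul2r hn); apply: leq_trans h1; rewrite /K; nia.
  have h3 : ((n + 1) ^ K <= d ^ K)%N.
    by rewrite leq_exp2r ?addn1 // /K muln_gt0 hN.
  move: h2 h3; set p := (n ^ K)%N; nia.
have hrK : N%:R * r ^+ K < 1 :> rat.
  have h : (N * n ^ K)%N%:R < (d ^ K)%N%:R :> rat by rewrite ltr_nat.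
  move: h; rewrite natrM !natrX -hrd exprMn mulrA => h.
  by rewrite -(ltr_pM2r (exprn_gt0 K hdR)) mul1r.
have hrKS : inS r (r ^+ K) := inS_pow r K.
have hne : r ^+ K <> 0 by move/eqP; rewrite expf_eq0 gt_eqF // andbF.
have [D [hD eD]] := hat _ hrKS hne.
set s := flatten (nseq (d ^ K) D).
have hs : forall a, a \in s -> atom r a by move=> a ha; apply: hD; apply: mem_rep ha.
have esum : \sum_(a <- s) a = (n ^ K)%N%:R.
  by rewrite sum_rep -eD -[in LHS]mulr_natr natrX -exprMn hrd natrX.
have hdv : Defs.sdvd r 1 (\sum_(a <- s) a).
  rewrite /Defs.sdvd; exists ((n ^ K - 1)%N%:R : rat); split; first exact: inS_nat.
  by rewrite esum natrB ?expn_gt0 ?hn // addrC subrK.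
have [t [hts [hsz [w [hw ew]]]]] := hb s hs hdv.
have hle : \sum_(a <- t) a <= r ^+ K *+ size t.
  apply: sum_le_const => a ha.
  have haD : a \in D by apply: mem_rep; apply: (mem_subseq hts).
  rewrite eD; apply: sum_mem_le haD => b hb'.
  by apply: ltW; apply: atom_pos hr (hD b hb').
have hw0 : 0 <= w := inS_ge0 (ltW hr) hw.
have hsz' : (size t)%:R <= N%:R :> rat by rewrite ler_nat.
have hrK0 : 0 <= r ^+ K by rewrite exprn_ge0 // ltW.
move: hle; rewrite ew -mulr_natl => hle.
have : (size t)%:R * r ^+ K <= N%:R * r ^+ K by apply: ler_wpM2r.
lra.
Qed.
Lemma inS_natr (m : nat) x : inS m%:R x -> exists k : nat, x = k%:R.
Proof.
move=> [c ->]; exists (\sum_(i < size c) (nth 0%N c i * m ^ i))%N.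
by rewrite natr_sum; apply: eq_bigr => i _; rewrite natrM natrX.
Qed.

Lemma part2 (r : rat) (hr : 0 < r) (hat : atomic r) : (exists m : nat, r = m%:R) -> omega_eq r 1 1.
Proof.
move=> [m em]; split; first by []; split; last by [].
move=> s hs [w [hw ew]].
case: s hs ew => [|a s] hs ew.
  have hw0 : 0 <= w := inS_ge0 (ltW hr) hw.
  by move: ew; rewrite big_nil; lra.
exists [:: a]; split; first by rewrite sub1seq mem_head.
split; first by [].
have ha := hs a (mem_head a s).
have [_ [hne _]] := ha.
have [k ek] : exists k : nat, a = k%:R by apply: (@inS_natr m); rewrite -em; case: ha.
have hk : (0 < k)%N by rewrite lt0n; apply/eqP => h; apply: hne; rewrite ek h.
exists (k - 1)%N%:R; split; first exact: inS_nat.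
by rewrite big_cons big_nil addr0 ek natrB // addrC subrK.
Qed.

Lemma part3 (r : rat) (hr : 0 < r) (hat : atomic r) :
  1 < r -> ~ (exists m : nat, r = m%:R) -> omega_eq r 1 `|denq r|%N.
Proof.
move=> hr1 hni.
set n := `|numq r|%N; set d := `|denq r|%N.
have hrd : r * d%:R = n%:R := rnd hr.
have hd : (0 < d)%N by rewrite absz_gt0 denq_neq0.
have hdR : 0 < d%:R :> rat by rewrite ltr0n.
have hn : (0 < n)%N.
  by rewrite -(ltr0n rat) -hrd mulr_gt0.
have hdn : (d < n)%N.
  rewrite -(ltr_nat rat) -hrd; nra.
have hco : coprime n d by apply: coprime_num_den.
split; first exact: hd.
split.
  move=> s hs [w [hw ew]].
  have [ks eks] := pows (fun a ha => atom_pow hr (hs a ha)).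
  have esum : \sum_(a <- s) a = \sum_(k <- ks) r ^+ k by rewrite eks big_map.
  have [h0 | h0] := boolP (0%N \in ks).
    exists [:: 1]; split.
      by rewrite sub1seq eks -(expr0 r); apply: (map_f (fun k => r ^+ k)).
    split; first by [].
    by exists 0; split; [apply: (inS_nat r 0) | rewrite big_cons big_nil !addr0].
  have [/hasP [k hk hc] | hc] := boolP (has (fun k => (d <= count_mem k ks)%N) ks).
    case: k hk hc => [|j] hk hc; first by rewrite hk in h0.
    exists (nseq d (r ^+ j.+1)); split.
      apply: subseq_nseq; apply: leq_trans hc _.
      rewrite eks count_map; apply: sub_count => i /= /eqP ->; exact: eqxx.
    split; first by rewrite size_nseq.
    exists (n%:R * r ^+ j - 1); split; first by apply: pow_dvd hrd (ltnW hdn) hn j.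
    rewrite sum_nseq -mulr_natr exprS -hrd; ring.
  exfalso.
  have hcnt : forall j, (count_mem j ks < d)%N.
    move=> j; have [hj | hj] := boolP (j \in ks).
      by rewrite ltnNge; apply: contra hc => h; apply/hasP; exists j.
    by move/count_memPn: hj => ->.
  have [B hB] := exB [seq k.-1 | k <- ks & (0 < k)%N].
  apply: (keyL hr hrd hco hB _ (a := 1%N) (e := w)) => //.
    by move=> j; rewrite count_dec.
  have hc0 : count_mem 0%N ks = 0%N by apply/count_memPn.
  by rewrite -ew esum (sum_dec r ks) hc0 add0r.
move=> N hN hb; rewrite leqNgt; apply/negP => hlt.
have hra := ratom hr1 hat hni.
set s := nseq d r.
have hs : forall a, a \in s -> atom r a.
  by move=> a; rewrite mem_nseq => /andP [_ /eqP ->].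
have hdv : Defs.sdvd r 1 (\sum_(a <- s) a).
  rewrite /Defs.sdvd; exists ((n - 1)%N%:R : rat); split; first exact: inS_nat.
  rewrite sum_nseq -[in LHS]mulr_natr hrd natrB //; ring.
have [t [hts [hsz [w [hw ew]]]]] := hb s hs hdv.
have et : t = nseq (size t) r.
  apply/all_pred1P; apply/allP => a ha; have := mem_subseq hts ha.
  by rewrite mem_nseq => /andP [].
have hk : (size t < d)%N by apply: leq_ltn_trans hsz hlt.
have es : forall k : nat, \sum_(i <- nseq k 0%N) r ^+ i = k%:R.
  by elim=> [|k ih]; rewrite ?big_nil // big_cons ih expr0 -natr1 addrC.
apply: (keyL hr hrd hco (B := 1%N) (ks := nseq (size t) 0%N) _ _ (a := 1%N) (e := w)) => //.
- by rewrite all_nseq orbT.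
- move=> j; rewrite count_nseq; case: (0%N == j) => /=; lia.
- by rewrite es mulr_natr -sum_nseq -et.
Qed.
Unset Implicit Arguments.

Theorem proposition5p3 (r : rat) (hr : 0 < r) (hat : atomic r) :
  (r < 1 -> omega_inf r 1) /\
  ((exists m : nat, r = m%:R) -> omega_eq r 1 1) /\
  (1 < r -> ~ (exists m : nat, r = m%:R) -> omega_eq r 1 `|denq r|%N).
Proof.
split; first exact: part1 hr hat.
split; first exact: part2 hr hat.
exact: part3 hr hat.
Qed.
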